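(* The unimodal spi-logic $\mathsf{SPi}_{lin}=\mathsf{SPi}+\{p\to\Diamond p,\ \Diamond\Diamond p\to\Diamond p,\ \Diamond(p\wedge q)\wedge\Diamond(p\wedge r)\to\Diamond(p\wedge\Diamond q\wedge\Diamond r)\}$ is complete.
   Context: Unimodal setting: one diamond $\Diamond$. Sp-formulas: built from propositional variables and $\top$ by $\wedge$ and $\Diamond$; sp-implications $\sigma\to\tau$. A SLO is an algebra $(A,\wedge,\top,\Diamond)$ with $(A,\wedge,\top)$ a meet-semilattice with top and $\Diamond$ monotone; it validates $\sigma\to\tau$ if $\sigma[\mathfrak a]\le\tau[\mathfrak a]$ for all valuations. Frames $(W,R)$ with standard Kripke semantics. $\Sigma\models_{\mathsf{Kr}}\iota$ (resp. $\models_{\mathsf{SLO}}$): valid in every frame (resp. SLO) validating $\Sigma$. $\mathsf{SPi}+\Sigma=\{\iota\mid\Sigma\models_{\mathsf{SLO}}\iota\}$ is complete if $\Sigma\models_{\mathsf{Kr}}\iota\iff\Sigma\models_{\mathsf{SLO}}\iota$ for every sp-implication $\iota$. (The frames validating the three axioms are exactly the linear quasiorders.) *)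

(* Defs.v *)
From Stdlib Require Import List.
Import ListNotations.

Inductive spform : Type :=
| SVar : nat -> spform
| STop : spform
| SAnd : spform -> spform -> spform
| SDia : spform -> spform.

Record spimp : Type := SpImp { ante : spform; cons : spform }.

Record frame : Type := Frame { world : Type; rel : world -> world -> Prop }.

Fixpoint ksat (F : frame) (V : nat -> world F -> Prop) (w : world F) (phi : spform) : Prop :=
  match phi with
  | SVar n => V n w
  | STop => True
  | SAnd a b => ksat F V w a /\ ksat F V w b
  | SDia a => exists v, rel F w v /\ ksat F V v a
  end.

Definition frame_valid (F : frame) (i : spimp) : Prop :=
  forall (V : nat -> world F -> Prop) (w : world F), ksat F V w (ante i) -> ksat F V w (cons i).

Definition Kr_conseq (Sigma : list spimp) (i : spimp) : Prop :=
  forall F : frame, (forall j, In j Sigma -> frame_valid F j) -> frame_valid F i.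

Record SLO : Type := MkSLO {
  car : Type;
  smeet : car -> car -> car;
  stop : car;
  sdia : car -> car;
  smeetA : forall x y z, smeet x (smeet y z) = smeet (smeet x y) z;
  smeetC : forall x y, smeet x y = smeet y x;
  smeetI : forall x, smeet x x = x;
  smeet_top : forall x, smeet x stop = x;
  sdia_mono : forall x y, smeet x y = x -> smeet (sdia x) (sdia y) = sdia x
}.

Definition sle (A : SLO) (x y : car A) : Prop := smeet A x y = x.

Fixpoint seval (A : SLO) (a : nat -> car A) (phi : spform) : car A :=
  match phi with
  | SVar n => a n
  | STop => stop A
  | SAnd p q => smeet A (seval A a p) (seval A a q)
  | SDia p => sdia A (seval A a p)
  end.

Definition slo_valid (A : SLO) (i : spimp) : Prop :=
  forall a : nat -> car A, sle A (seval A a (ante i)) (seval A a (cons i)).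

Definition SLO_conseq (Sigma : list spimp) (i : spimp) : Prop :=
  forall A : SLO, (forall j, In j Sigma -> slo_valid A j) -> slo_valid A i.

Definition complete (Sigma : list spimp) : Prop :=
  forall i : spimp, Kr_conseq Sigma i <-> SLO_conseq Sigma i.

Definition p_ := SVar 0.
Definition q_ := SVar 1.
Definition r_ := SVar 2.

Definition Sigma_lin : list spimp :=
  [ SpImp p_ (SDia p_);
    SpImp (SDia (SDia p_)) (SDia p_);
    SpImp (SAnd (SDia (SAnd p_ q_)) (SDia (SAnd p_ r_)))
          (SDia (SAnd p_ (SAnd (SDia q_) (SDia r_)))) ].

(* Main.v *)
Require Import Defs.
From Stdlib Require Import List Lia Bool Arith PeanoNat FunctionalExtensionality PropExtensionality.
Import ListNotations.

Definition natF : frame := Frame nat le.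

Definition Sem (s t : spform) : Prop :=
  forall (V : nat -> nat -> Prop) (w : nat), ksat natF V w s -> ksat natF V w t.

Fixpoint linh (s : spform) : list nat :=
  match s with
  | SVar n => [n]
  | STop => []
  | SAnd a b => linh a ++ linh b
  | SDia _ => []
  end.

Fixpoint ctail (c : spform -> bool) (s : spform) : list (list nat) :=
  match s with
  | SAnd a b => ctail c a ++ ctail c b
  | SDia a => if c a then [] else linh a :: ctail c a
  | _ => []
  end.

Fixpoint fr (c : spform -> bool) (s : spform) : list spform :=
  match s with
  | SAnd a b => fr c a ++ fr c b
  | SDia a => if c a then [a] else fr c a
  | _ => []
  end.

Fixpoint conjQ (Q : list nat) : spform :=
  match Q with [] => STop | k :: Q' => SAnd (SVar k) (conjQ Q') end.

Fixpoint bigD (l : list spform) : spform :=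
  match l with [] => STop | t :: l' => SAnd (SDia t) (bigD l') end.

Definition inclb (Q L : list nat) : bool :=
  forallb (fun k => existsb (Nat.eqb k) L) Q.

Lemma inclb_spec Q L : inclb Q L = true <-> (forall k, In k Q -> In k L).
Proof.
  unfold inclb. rewrite forallb_forall. split; intros H k Hk.
  - specialize (H k Hk). apply existsb_exists in H as [x [Hx Hkx]].
    apply Nat.eqb_eq in Hkx. subst; auto.
  - apply existsb_exists. exists k. split; auto. apply Nat.eqb_refl.
Qed.

Lemma model c : forall s (V : nat -> nat -> Prop) i j K, i <= j ->
  j + length (ctail c s) <= K ->
  (forall k, In k (linh s) -> V k i) ->
  (forall m k, m < length (ctail c s) -> In k (nth m (ctail c s) []) -> V k (j + m)) ->
  (forall t, In t (fr c s) -> exists v, K <= v /\ ksat natF V v t) ->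
  ksat natF V i s.
Proof.
  induction s; intros V i j K Hij HK Hh Ht Hf; simpl in *.
  - apply Hh; left; auto.
  - auto.
  - rewrite length_app in HK. split.
    + apply IHs1 with j K; auto; try lia.
      * intros k Hk; apply Hh; apply in_or_app; auto.
      * intros m k Hm Hk. apply Ht. rewrite length_app; lia.
        rewrite app_nth1 by lia. auto.
      * intros t Hin; apply Hf; apply in_or_app; auto.
    + apply IHs2 with (j + length (ctail c s1)) K; auto; try lia.
      * intros k Hk; apply Hh; apply in_or_app; auto.
      * intros m k Hm Hk.
        replace (j + length (ctail c s1) + m) with (j + (length (ctail c s1) + m)) by lia.
        apply Ht. rewrite length_app; lia.
        rewrite app_nth2 by lia.
        replace (length (ctail c s1) + m - length (ctail c s1)) with m by lia. auto.
      * intros t Hin; apply Hf; apply in_or_app; auto.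
  - destruct (c s) eqn:E.
    + destruct (Hf s (or_introl eq_refl)) as [v [Hv Hs]].
      exists v. simpl in HK. split; [lia|auto].
    + exists j. simpl in HK. split; auto.
      apply IHs with (j + 1) K; auto; try lia.
      * intros k Hk. specialize (Ht 0 k). rewrite Nat.add_0_r in Ht.
        apply Ht; simpl; auto; lia.
      * intros m k Hm Hk. replace (j + 1 + m) with (j + S m) by lia.
        apply Ht; simpl; auto; lia.
Qed.

Lemma topsat F V w s : ksat F V w s -> forall k, In k (linh s) -> V k w.
Proof.
  revert w; induction s; intros w H k Hk; simpl in *.
  - destruct Hk as [<-|[]]; auto.
  - contradiction.
  - destruct H; apply in_app_or in Hk as [Hk|Hk]; eauto.
  - contradiction.
Qed.

Lemma pullback V s : forall v w, ksat natF V v s -> w <= v ->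
  (forall k, In k (linh s) -> V k w) -> ksat natF V w s.
Proof.
  induction s; intros v w Hs Hwv Hk; simpl in *.
  - apply Hk; auto.
  - auto.
  - destruct Hs; split.
    + apply IHs1 with v; auto. intros; apply Hk; apply in_or_app; auto.
    + apply IHs2 with v; auto. intros; apply Hk; apply in_or_app; auto.
  - destruct Hs as [u [Hu Hs]]. exists u; split; auto; lia.
Qed.

Lemma shift (V V' : nat -> nat -> Prop) K w
  (HV : forall k x, K <= x -> (V' k x <-> V k (w + (x - K)))) :
  forall s x, K <= x -> (ksat natF V' x s <-> ksat natF V (w + (x - K)) s).
Proof.
  induction s; intros x Hx; simpl.
  - apply HV; auto.
  - tauto.
  - rewrite IHs1, IHs2 by auto. tauto.
  - split.
    + intros [v [Hv Hs]]. exists (w + (v - K)). split; [lia|].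
      apply IHs; auto; lia.
    + intros [y [Hy Hs]]. exists (K + (y - w)). split; [lia|].
      apply IHs; [lia|].
      replace (w + (K + (y - w) - K)) with y by lia. auto.
Qed.

Lemma ctail_lab c s L : In L (ctail c s) -> exists a, L = linh a /\ c a = false.
Proof.
  induction s; simpl; try tauto.
  - intros H; apply in_app_or in H as [H|H]; auto.
  - destruct (c s) eqn:E; simpl; try tauto.
    intros [<-|H]; eauto.
Qed.

Lemma fr_c c s t : In t (fr c s) -> c t = true.
Proof.
  induction s; simpl; try tauto.
  - intros H; apply in_app_or in H as [H|H]; auto.
  - destruct (c s) eqn:E; simpl; auto.
    intros [<-|[]]; auto.
Qed.

Lemma fr_false s : fr (fun _ => false) s = [].
Proof. induction s; simpl; auto. rewrite IHs1, IHs2; auto. Qed.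

Lemma linh_conjQ Q : linh (conjQ Q) = Q.
Proof. induction Q; simpl; auto. rewrite IHQ; auto. Qed.

Lemma bigD_sat F V w l : ksat F V w (bigD l) -> forall u, In u l -> exists v, rel F w v /\ ksat F V v u.
Proof.
  induction l; simpl; try tauto.
  intros [H1 H2] u [<-|Hu]; auto.
Qed.

Lemma construct s t (Hroot : inclb (linh t) (linh s) = false) (HS : Sem s (SDia t))
  (V : nat -> nat -> Prop) w
  (Hfr : forall u, In u (fr (fun a => inclb (linh t) (linh a)) s) ->
         exists v, w <= v /\ ksat natF V v u) :
  exists u, w <= u /\ ksat natF V u t.
Proof.
  set (c := fun a => inclb (linh t) (linh a)) in *.
  set (tl := ctail c s).
  set (K := S (length tl)).
  set (lab := fun x => match x with 0 => linh s | S m => nth m tl [] end).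
  set (V' := fun k x => (x < K /\ In k (lab x)) \/ (K <= x /\ V k (w + (x - K)))).
  assert (HV : forall k x, K <= x -> (V' k x <-> V k (w + (x - K)))).
  { intros k x Hx; unfold V'; split.
    - intros [[? ?]|[? ?]]; [lia|auto].
    - intros; right; auto. }
  assert (Hs : ksat natF V' 0 s).
  { apply model with c 1 K; auto; try lia.
    - intros k Hk; left; split; [unfold K; lia|]; simpl; auto.
    - intros m k Hm Hk; left; split; [unfold K, tl in *; simpl; lia|]; simpl; auto.
    - intros u Hu. destruct (Hfr u Hu) as [v [Hv Hu']].
      exists (K + (v - w)). split; [lia|].
      apply (shift V V' K w HV); [lia|].
      replace (w + (K + (v - w) - K)) with v by lia; auto. }
  destruct (HS V' 0 Hs) as [x [_ Hx]].
  destruct (le_lt_dec K x) as [HKx|HKx].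
  - exists (w + (x - K)). split; [lia|]. apply (shift V V' K w HV); auto.
  - exfalso.
    pose proof (topsat _ _ _ _ Hx) as Htop.
    assert (Hi : inclb (linh t) (lab x) = true).
    { apply inclb_spec. intros k Hk. destruct (Htop k Hk) as [[_ ?]|[? _]]; [auto|lia]. }
    destruct x as [|m]; simpl in Hi.
    + congruence.
    + assert (Hm : m < length tl) by (unfold K in HKx; lia).
      pose proof (nth_In tl [] Hm) as Hin.
      destruct (ctail_lab c s _ Hin) as [a [Ha Hca]].
      unfold c in Hca. rewrite <- Ha in Hca. congruence.
Qed.

Section Alg.
Variable A : SLO.
Hypothesis HA : forall j, In j Sigma_lin -> slo_valid A j.
Variable a : nat -> car A.

Notation ev := (seval A a).

Lemma le_refl x : sle A x x.
Proof. apply smeetI. Qed.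

Lemma le_trans x y z : sle A x y -> sle A y z -> sle A x z.
Proof. unfold sle; intros H H0. rewrite <- H. rewrite <- smeetA. rewrite H0. reflexivity. Qed.

Lemma meet_l x y : sle A (smeet A x y) x.
Proof. unfold sle. rewrite (smeetC A x y). rewrite <- smeetA. rewrite smeetI. reflexivity. Qed.

Lemma meet_r x y : sle A (smeet A x y) y.
Proof. unfold sle. rewrite <- smeetA. rewrite smeetI. reflexivity. Qed.

Lemma glb x y z : sle A z x -> sle A z y -> sle A z (smeet A x y).
Proof. unfold sle; intros H H0. rewrite smeetA. rewrite H. exact H0. Qed.

Lemma mono x y : sle A x y -> sle A (sdia A x) (sdia A y).
Proof. apply sdia_mono. Qed.

Lemma letop x : sle A x (stop A).
Proof. apply smeet_top. Qed.

Lemma ax1 x : sle A x (sdia A x).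
Proof. exact (HA (SpImp p_ (SDia p_)) ltac:(simpl; auto) (fun _ => x)). Qed.

Lemma ax2 x : sle A (sdia A (sdia A x)) (sdia A x).
Proof. exact (HA (SpImp (SDia (SDia p_)) (SDia p_)) ltac:(simpl; auto) (fun _ => x)). Qed.

Lemma ax3 p q r : sle A (smeet A (sdia A (smeet A p q)) (sdia A (smeet A p r)))
  (sdia A (smeet A p (smeet A (sdia A q) (sdia A r)))).
Proof.
  exact (HA _ ltac:(simpl; auto) (fun n => match n with 0 => p | 1 => q | _ => r end)).
Qed.

Lemma linh_le s k : In k (linh s) -> sle A (ev s) (a k).
Proof.
  induction s; simpl; try tauto.
  - intros [<-|[]]; apply le_refl.
  - intros H; apply in_app_or in H as [H|H].
    + eapply le_trans; [apply meet_l|auto].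
    + eapply le_trans; [apply meet_r|auto].
Qed.

Lemma conjQ_ge Q x : (forall k, In k Q -> sle A x (a k)) -> sle A x (ev (conjQ Q)).
Proof.
  induction Q; simpl; intros H.
  - apply letop.
  - apply glb; auto.
Qed.

Lemma fr_le c s t : In t (fr c s) -> sle A (ev s) (sdia A (ev t)).
Proof.
  induction s; simpl; try tauto.
  - intros H; apply in_app_or in H as [H|H].
    + eapply le_trans; [apply meet_l|auto].
    + eapply le_trans; [apply meet_r|auto].
  - destruct (c s) eqn:E.
    + intros [<-|[]]; apply le_refl.
    + intros H. eapply le_trans; [apply mono, IHs, H|apply ax2].
Qed.

Lemma ev_bigD_cons t l : ev (bigD (t :: l)) = smeet A (sdia A (ev t)) (ev (bigD l)).
Proof. reflexivity. Qed.

Lemma bigD_dia l : sle A (sdia A (ev (bigD l))) (ev (bigD l)).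
Proof.
  induction l.
  - apply letop.
  - rewrite ev_bigD_cons. apply glb.
    + eapply le_trans; [apply mono, meet_l|apply ax2].
    + eapply le_trans; [apply mono, meet_r|auto].
Qed.

Lemma F3 x p l : l <> [] ->
  (forall t, In t l -> sle A x (sdia A (ev t)) /\ sle A (ev t) p) ->
  sle A x (sdia A (smeet A p (ev (bigD l)))).
Proof.
  induction l as [|t l IH]; intros Hne H; [congruence|].
  assert (H1 : sle A x (sdia A (smeet A p (ev t)))).
  { destruct (H t (or_introl eq_refl)) as [Hx Hp].
    eapply le_trans; [exact Hx|]. apply mono. apply glb; auto. apply le_refl. }
  destruct l as [|t' l'].
  - destruct (H t (or_introl eq_refl)) as [Hx Hp].
    eapply le_trans; [exact H1|]. apply mono. apply glb; [apply meet_l|].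
    rewrite ev_bigD_cons. apply glb.
    + eapply le_trans; [apply meet_r|apply ax1].
    + apply letop.
  - assert (H2 := IH ltac:(congruence) (fun u Hu => H u (or_intror Hu))).
    eapply le_trans; [apply (glb _ _ _ H1 H2)|].
    eapply le_trans; [apply ax3|]. apply mono.
    apply glb; [apply meet_l|].
    rewrite (ev_bigD_cons t). apply glb.
    + eapply le_trans; [apply meet_r|apply meet_l].
    + eapply le_trans; [apply meet_r|]. eapply le_trans; [apply meet_r|apply bigD_dia].
Qed.

Theorem core : forall t s, Sem s t -> sle A (ev s) (ev t).
Proof.
  induction t; intros s HS.
  -
    set (c0 := fun _ : spform => false).
    set (tl := ctail c0 s).
    set (lab := fun x => match x with 0 => linh s | S m => nth m tl [] end).
    set (V' := fun k x => In k (lab x)).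
    assert (Hs : ksat natF V' 0 s).
    { apply model with c0 1 (S (length tl)); auto; try lia.
      intros u Hu. unfold c0 in Hu. rewrite fr_false in Hu. contradiction. }
    apply linh_le. exact (HS V' 0 Hs).
  - apply letop.
  - simpl. apply glb.
    + apply IHt1. intros V w H. exact (proj1 (HS V w H)).
    + apply IHt2. intros V w H. exact (proj2 (HS V w H)).
  - destruct (inclb (linh t) (linh s)) eqn:E.
    + assert (Hst : Sem s t).
      { intros V w Hw. destruct (HS V w Hw) as [u [Hu Ht]].
        apply pullback with u; auto.
        intros k Hk. apply (topsat _ _ _ _ Hw). apply inclb_spec with (linh t); auto. }
      eapply le_trans; [apply IHt, Hst|apply ax1].
    + set (c := fun a0 => inclb (linh t) (linh a0)).
      set (fl := fr c s).
      assert (Hne : fl <> []).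
      { intro Hnil.
        destruct (construct s t E HS (fun _ _ => False) 0) as [u [_ Hu]].
        { intros u Hu. fold c in Hu. fold fl in Hu. rewrite Hnil in Hu. contradiction. }
        pose proof (topsat _ _ _ _ Hu) as Ht.
        destruct (linh t) as [|k l] eqn:El.
        - simpl in E. congruence.
        - apply (Ht k). left; auto. }
      set (rho := SAnd (conjQ (linh t)) (bigD fl)).
      assert (Hrho : Sem rho t).
      { intros V w [Hq Hb].
        destruct (construct s t E HS V w) as [u [Hwu Hu]].
        { intros u Hu. exact (bigD_sat natF V w fl Hb u Hu). }
        apply pullback with u; auto.
        intros k Hk. apply (topsat _ _ _ _ Hq). rewrite linh_conjQ; auto. }
      pose proof (IHt rho Hrho) as IH.
      eapply le_trans; [|apply mono, IH].
      simpl. apply F3; auto.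
      intros u Hu. split.
      * apply (fr_le c); auto.
      * apply conjQ_ge. intros k Hk. apply linh_le.
        pose proof (fr_c c s u Hu) as Hc. unfold c in Hc.
        exact (proj1 (inclb_spec _ _) Hc k Hk).
Qed.

End Alg.

Lemma natF_valid : forall j, In j Sigma_lin -> frame_valid natF j.
Proof.
  intros j Hj. simpl in Hj.
  destruct Hj as [<-|[<-|[<-|[]]]]; intros V w; simpl.
  - intros H. exists w; split; auto.
  - intros [u [Hu [v [Hv H]]]]. exists v; split; [lia|auto].
  - intros [[u [Hu [Hp Hq]]] [v [Hv [Hp' Hr]]]].
    destruct (Nat.le_ge_cases u v).
    + exists u; split; auto. split; auto. split.
      * exists u; split; auto.
      * exists v; split; auto.
    + exists v; split; auto. split; auto. split.
      * exists u; split; auto.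
      * exists v; split; auto.
Qed.

Definition PS (F : frame) : SLO.
Proof.
  refine (MkSLO (world F -> Prop) (fun X Y w => X w /\ Y w) (fun _ => True)
            (fun X w => exists v, rel F w v /\ X v) _ _ _ _ _);
  intros; apply functional_extensionality; intro w;
  apply propositional_extensionality.
  - tauto.
  - tauto.
  - tauto.
  - tauto.
  - split; [tauto|]. intros [v [Hv Hx]]. split; [exists v; auto|].
    exists v; split; auto. rewrite <- H in Hx. tauto.
Defined.

Lemma seval_ksat F (a : nat -> world F -> Prop) phi : forall w,
  seval (PS F) a phi w <-> ksat F a w phi.
Proof.
  induction phi; intros w; simpl; try tauto.
  - rewrite IHphi1, IHphi2. tauto.
  - split; intros [v [Hv H]]; exists v; split; auto; apply IHphi; auto.
Qed.

Theorem theorem7p12 : complete Sigma_lin.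
Proof.
  intros i. split.
  - intros HK A HA a.
    apply core; auto.
    intros V w Hw. exact (HK natF natF_valid V w Hw).
  - intros HS F HF V w Hw.
    assert (HA : forall j, In j Sigma_lin -> slo_valid (PS F) j).
    { intros j Hj a. unfold sle.
      apply functional_extensionality; intro x; apply propositional_extensionality.
      simpl. split; [tauto|]. intros H; split; auto.
      apply seval_ksat. apply (HF j Hj a x). apply seval_ksat; auto. }
    pose proof (HS (PS F) HA V) as H. unfold sle in H.
    pose proof (f_equal (fun f => f w) H) as H'. simpl in H'.
    apply seval_ksat.
    assert (H0 : seval (PS F) V (ante i) w) by (apply seval_ksat; auto).
    rewrite <- H' in H0. tauto.
Qed.
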